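(* Let $q\in\mathbb C$ with $|q|=1$, $q^2\neq1$, and let $A,B$ be self-adjoint operators on a Hilbert space $\mathcal H$. Suppose $\mu,\mu q,\mu q^2\in\rho(B)$, $R_\mu(B)A\subseteq qAR_{\mu q}(B)$ and $R_{\mu q}(B)A\subseteq qAR_{\mu q^2}(B)$. Then $\mathcal D_{q^2}(A^2,B)$ is a core for $B$.
   Context: $\rho(T)$ denotes the resolvent set and $R_\lambda(T)=(T-\lambda I)^{-1}$ the resolvent of a closed operator $T$; $S\subseteq T$ means $T$ extends $S$; products of unbounded operators have their natural domains. For self-adjoint $X,Y$ and a complex number $p$, $\mathcal D_p(X,Y):=\{f\in\mathcal D(YX)\cap\mathcal D(XY): XYf=pYXf\}$; thus $\mathcal D_{q^2}(A^2,B)=\{f\in\mathcal D(BA^2)\cap\mathcal D(A^2B): A^2Bf=q^2BA^2f\}$. *)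

(* Defs.v *)
From Stdlib Require Import Reals.
Set Implicit Arguments.
Open Scope R_scope.

Record Cplx := mkC { Re : R ; Im : R }.
Definition Czero : Cplx := mkC 0 0.
Definition Cone : Cplx := mkC 1 0.
Definition Cadd (a b : Cplx) : Cplx := mkC (Re a + Re b) (Im a + Im b).
Definition Copp (a : Cplx) : Cplx := mkC (- Re a) (- Im a).
Definition Cmul (a b : Cplx) : Cplx :=
  mkC (Re a * Re b - Im a * Im b) (Re a * Im b + Im a * Re b).
Definition Cconj (a : Cplx) : Cplx := mkC (Re a) (- Im a).
Definition Cabs (a : Cplx) : R := sqrt (Re a * Re a + Im a * Im a).

(* ---------- Complex Hilbert spaces ----------
   inner product linear in the first argument, conjugate-linear in the second *)
Record Hilbert := {
  hcar :> Type;
  hzero : hcar;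
  hadd : hcar -> hcar -> hcar;
  hopp : hcar -> hcar;
  hscal : Cplx -> hcar -> hcar;
  inner : hcar -> hcar -> Cplx;
  hadd_assoc : forall x y z, hadd x (hadd y z) = hadd (hadd x y) z;
  hadd_comm : forall x y, hadd x y = hadd y x;
  hadd_0 : forall x, hadd x hzero = x;
  hadd_opp : forall x, hadd x (hopp x) = hzero;
  hscal_assoc : forall a b x, hscal a (hscal b x) = hscal (Cmul a b) x;
  hscal_1 : forall x, hscal Cone x = x;
  hscal_addv : forall a x y, hscal a (hadd x y) = hadd (hscal a x) (hscal a y);
  hscal_adds : forall a b x, hscal (Cadd a b) x = hadd (hscal a x) (hscal b x);
  inner_add : forall x y z, inner (hadd x y) z = Cadd (inner x z) (inner y z);
  inner_scal : forall a x y, inner (hscal a x) y = Cmul a (inner x y);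
  inner_conj : forall x y, inner y x = Cconj (inner x y);
  inner_pos : forall x, 0 <= Re (inner x x);
  inner_def : forall x, inner x x = Czero -> x = hzero;
  hcomplete : forall u : nat -> hcar,
    (forall eps, 0 < eps -> exists N, forall m n, (N <= m)%nat -> (N <= n)%nat ->
       sqrt (Re (inner (hadd (u m) (hopp (u n))) (hadd (u m) (hopp (u n))))) < eps) ->
    exists l, forall eps, 0 < eps -> exists N, forall n, (N <= n)%nat ->
       sqrt (Re (inner (hadd (u n) (hopp l)) (hadd (u n) (hopp l)))) < eps
}.

Arguments hzero {h} : rename.
Arguments hadd {h} : rename.
Arguments hopp {h} : rename.
Arguments hscal {h} : rename.
Arguments inner {h} : rename.

Section Ops.
Variable H : Hilbert.

Definition hsub (x y : H) : H := hadd x (hopp y).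
Definition hnorm (x : H) : R := sqrt (Re (inner x x)).

Definition converges (u : nat -> H) (l : H) : Prop :=
  forall eps, 0 < eps -> exists N, forall n, (N <= n)%nat -> hnorm (hsub (u n) l) < eps.

Record Op := mkOp { dom : H -> Prop ; app : H -> H }.

Definition is_linear (T : Op) : Prop :=
  dom T hzero /\
  (forall x y, dom T x -> dom T y -> dom T (hadd x y) /\
       app T (hadd x y) = hadd (app T x) (app T y)) /\
  (forall a x, dom T x -> dom T (hscal a x) /\ app T (hscal a x) = hscal a (app T x)).

Definition op_incl (S T : Op) : Prop :=
  forall x, dom S x -> dom T x /\ app T x = app S x.

Definition op_comp (S T : Op) : Op :=
  mkOp (fun x => dom T x /\ dom S (app T x)) (fun x => app S (app T x)).

Definition op_scale (c : Cplx) (T : Op) : Op :=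
  mkOp (dom T) (fun x => hscal c (app T x)).

Definition op_total (f : H -> H) : Op := mkOp (fun _ => True) f.

Definition dense (D : H -> Prop) : Prop :=
  forall x, exists u : nat -> H, (forall n, D (u n)) /\ converges u x.

(* self-adjoint: densely defined linear operator with T = T^* *)
Definition self_adjoint (T : Op) : Prop :=
  is_linear T /\ dense (dom T) /\
  (forall g, dom T g <->
     exists h, forall f, dom T f -> inner (app T f) g = inner f h) /\
  (forall f g, dom T f -> dom T g -> inner (app T f) g = inner f (app T g)).

Definition closed_op (T : Op) : Prop :=
  forall (u : nat -> H) x y, (forall n, dom T (u n)) -> converges u x ->
    converges (fun n => app T (u n)) y -> dom T x /\ app T x = y.

Definition bounded_fun (R0 : H -> H) : Prop :=
  exists M, forall x, hnorm (R0 x) <= M * hnorm x.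

(* Rl is the resolvent (T - lam I)^{-1}: a bounded everywhere-defined
   two-sided inverse of T - lam I : dom T -> H. *)
Definition is_resolvent (T : Op) (lam : Cplx) (Rl : H -> H) : Prop :=
  bounded_fun Rl /\
  (forall g, dom T (Rl g) /\ hsub (app T (Rl g)) (hscal lam (Rl g)) = g) /\
  (forall f, dom T f -> Rl (hsub (app T f) (hscal lam f)) = f).

Definition in_resolvent_set (T : Op) (lam : Cplx) : Prop :=
  closed_op T /\ exists Rl, is_resolvent T lam Rl.

Definition Dp (p : Cplx) (X Y : Op) : H -> Prop :=
  fun f => dom (op_comp Y X) f /\ dom (op_comp X Y) f /\
           app (op_comp X Y) f = hscal p (app (op_comp Y X) f).

(* D is a core for T: D ⊆ dom T and the closure of T|_D is T,
   i.e. D is dense in dom T for the graph norm *)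
Definition is_core (D : H -> Prop) (T : Op) : Prop :=
  (forall f, D f -> dom T f) /\
  forall f, dom T f -> exists u : nat -> H, (forall n, D (u n)) /\
     converges u f /\ converges (fun n => app T (u n)) (app T f).

End Ops.

Arguments hsub {H}. Arguments hnorm {H}. Arguments converges {H}.
Arguments dom {H}. Arguments app {H}. Arguments mkOp {H}.
Arguments is_linear {H}. Arguments op_incl {H}. Arguments op_comp {H}.
Arguments op_scale {H}. Arguments op_total {H}. Arguments dense {H}.
Arguments self_adjoint {H}. Arguments closed_op {H}. Arguments bounded_fun {H}.
Arguments is_resolvent {H}. Arguments in_resolvent_set {H}. Arguments Dp {H}.
Arguments is_core {H}.

(* Main.v *)
Require Import Defs.
From Stdlib Require Import Reals Lra Lia Psatz Classical ClassicalEpsilon.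
Open Scope R_scope.
Arguments hadd_assoc {h}. Arguments hadd_comm {h}. Arguments hadd_0 {h}.
Arguments hadd_opp {h}. Arguments hscal_assoc {h}. Arguments hscal_1 {h}.
Arguments hscal_addv {h}. Arguments hscal_adds {h}. Arguments inner_add {h}.
Arguments inner_scal {h}. Arguments inner_conj {h}. Arguments inner_pos {h}.
Arguments inner_def {h}. Arguments hcomplete {h}.

Lemma Ceq (a b : Cplx) : Re a = Re b -> Im a = Im b -> a = b.
Proof. destruct a, b; simpl; intros; subst; reflexivity. Qed.

Definition Nn {H : Hilbert} (x : H) : R := Re (inner x x).

Lemma hadd_0l {H : Hilbert} (x : H) : hadd hzero x = x.
Proof. rewrite hadd_comm; apply hadd_0. Qed.

Lemma hadd_reg {H : Hilbert} (x y z : H) : hadd x y = hadd x z -> y = z.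
Proof.
  intro E. assert (E2 : hadd (hopp x) (hadd x y) = hadd (hopp x) (hadd x z)) by (rewrite E; auto).
  rewrite !hadd_assoc in E2. rewrite (hadd_comm (hopp x) x), hadd_opp, !hadd_0l in E2. exact E2.
Qed.

Lemma hscal_0s {H : Hilbert} (x : H) : hscal Czero x = hzero.
Proof.
  apply (hadd_reg (hscal Czero x)). rewrite hadd_0, <- hscal_adds.
  f_equal. apply Ceq; simpl; ring.
Qed.

Lemma hopp_scal {H : Hilbert} (x : H) : hopp x = hscal (mkC (-1) 0) x.
Proof.
  apply (hadd_reg x). rewrite hadd_opp. rewrite <- (hscal_1 x) at 1.
  rewrite <- hscal_adds. rewrite <- (hscal_0s x). f_equal. apply Ceq; simpl; ring.
Qed.

Lemma inner_0l {H : Hilbert} (y : H) : inner hzero y = Czero.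
Proof.
  rewrite <- (hscal_0s hzero), inner_scal. apply Ceq; simpl; ring.
Qed.

Lemma inner_add_r {H : Hilbert} (x y z : H) : inner x (hadd y z) = Cadd (inner x y) (inner x z).
Proof.
  rewrite inner_conj, inner_add, (inner_conj x y), (inner_conj x z).
  apply Ceq; simpl; ring.
Qed.

Lemma inner_scal_r {H : Hilbert} a (x y : H) : inner x (hscal a y) = Cmul (Cconj a) (inner x y).
Proof.
  rewrite inner_conj, inner_scal, (inner_conj x y). apply Ceq; simpl; ring.
Qed.

Lemma inner_opp_l {H : Hilbert} (x y : H) : inner (hopp x) y = Copp (inner x y).
Proof. rewrite hopp_scal, inner_scal. apply Ceq; simpl; ring. Qed.

Lemma inner_opp_r {H : Hilbert} (x y : H) : inner x (hopp y) = Copp (inner x y).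
Proof. rewrite hopp_scal, inner_scal_r. apply Ceq; simpl; ring. Qed.

Lemma inner_0r {H : Hilbert} (y : H) : inner y hzero = Czero.
Proof. rewrite inner_conj, inner_0l. apply Ceq; simpl; ring. Qed.

Lemma Im_inner_self {H : Hilbert} (x : H) : Im (inner x x) = 0.
Proof.
  pose proof (f_equal Im (inner_conj x x)) as E. simpl in E. lra.
Qed.

Lemma Nn_pos {H : Hilbert} (x : H) : 0 <= Nn x.
Proof. apply inner_pos. Qed.

Lemma Nn_zero {H : Hilbert} (x : H) : Nn x = 0 -> x = hzero.
Proof.
  intro E. apply inner_def. apply Ceq; simpl; [exact E | apply Im_inner_self].
Qed.

Ltac inner_expand :=
  unfold Nn, hsub in *;
  repeat (rewrite ?inner_add, ?inner_add_r, ?inner_scal, ?inner_scal_r,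
                  ?inner_opp_l, ?inner_opp_r, ?inner_0l, ?inner_0r);
  cbn [Re Im Cadd Cmul Copp Cconj Czero Cone] in *.

Lemma vec_eq_lem {H : Hilbert} (x y : H) : Nn (hsub x y) = 0 -> x = y.
Proof.
  intro E. apply Nn_zero in E. apply (hadd_reg (hopp y)).
  rewrite (hadd_comm (hopp y) y), hadd_opp, hadd_comm. exact E.
Qed.

Ltac vec_eq := apply vec_eq_lem; inner_expand; field.

Lemma test {H : Hilbert} (a b c : H) (t : R) :
  hadd (hsub a b) (hscal (mkC t 0) c) = hsub (hadd (hscal (mkC t 0) c) a) b.
Proof. vec_eq. Qed.
Lemma Nn_add {H : Hilbert} (a b : H) : Nn (hadd a b) = Nn a + Nn b + 2 * Re (inner a b).
Proof. inner_expand. rewrite (inner_conj b a). simpl. ring. Qed.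

Lemma Nn_scal {H : Hilbert} c (x : H) : Nn (hscal c x) = (Re c * Re c + Im c * Im c) * Nn x.
Proof. inner_expand. rewrite Im_inner_self. ring. Qed.

Lemma hnorm_Nn {H : Hilbert} (x : H) : hnorm x = sqrt (Nn x).
Proof. reflexivity. Qed.

Lemma hnorm_pos {H : Hilbert} (x : H) : 0 <= hnorm x.
Proof. apply sqrt_pos. Qed.

Lemma hnorm_sq {H : Hilbert} (x : H) : hnorm x * hnorm x = Nn x.
Proof. rewrite hnorm_Nn. apply sqrt_sqrt, Nn_pos. Qed.

Lemma CS_re {H : Hilbert} (a b : H) : Re (inner a b) * Re (inner a b) <= Nn a * Nn b.
Proof.
  assert (K : forall t, 0 <= Nn a + 2 * t * Re (inner a b) + t * t * Nn b).
  { intro t. pose proof (Nn_pos (hadd a (hscal (mkC t 0) b))) as P.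
    rewrite Nn_add, Nn_scal in P. rewrite inner_scal_r in P. simpl in P. nra. }
  pose proof (Nn_pos a). pose proof (Nn_pos b).
  destruct (Req_dec (Nn b) 0) as [E|E].
  - apply Nn_zero in E. subst b. rewrite inner_0r. simpl. nra.
  - set (r := Re (inner a b)) in *. set (nb := Nn b) in *.
    specialize (K (- r / nb)).
    assert (0 < nb) by lra.
    assert (K2 : 0 <= nb * (Nn a + 2 * (- r / nb) * r + - r / nb * (- r / nb) * nb)) by nra.
    replace (nb * (Nn a + 2 * (- r / nb) * r + - r / nb * (- r / nb) * nb)) with (nb * Nn a - r * r) in K2 by (field; lra).
    nra.
Qed.

Lemma re_bound {H : Hilbert} (a b : H) : Rabs (Re (inner a b)) <= hnorm a * hnorm b.
Proof.
  rewrite <- sqrt_Rsqr_abs. rewrite !hnorm_Nn, <- sqrt_mult by apply Nn_pos.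
  apply sqrt_le_1_alt. unfold Rsqr. apply CS_re.
Qed.

Lemma im_bound {H : Hilbert} (a b : H) : Rabs (Im (inner a b)) <= hnorm a * hnorm b.
Proof.
  pose proof (re_bound (hscal (mkC 0 1) a) b) as K.
  rewrite inner_scal in K. simpl in K.
  rewrite (hnorm_Nn (hscal _ _)), Nn_scal in K. simpl in K.
  replace ((0 * 0 + 1 * 1) * Nn a) with (Nn a) in K by ring.
  replace (0 * Re (inner a b) - 1 * Im (inner a b)) with (- Im (inner a b)) in K by ring.
  rewrite Rabs_Ropp in K. exact K.
Qed.

Lemma hnorm_scal {H : Hilbert} c (x : H) : hnorm (hscal c x) = Cabs c * hnorm x.
Proof.
  rewrite !hnorm_Nn, Nn_scal, sqrt_mult. reflexivity.
  nra. apply Nn_pos.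
Qed.

Lemma Cabs_pos c : 0 <= Cabs c.
Proof. apply sqrt_pos. Qed.

Lemma triangle {H : Hilbert} (a b : H) : hnorm (hadd a b) <= hnorm a + hnorm b.
Proof.
  rewrite (hnorm_Nn (hadd a b)). rewrite <- (sqrt_square (hnorm a + hnorm b)).
  2: { pose proof (hnorm_pos a); pose proof (hnorm_pos b); lra. }
  apply sqrt_le_1_alt. rewrite Nn_add.
  pose proof (re_bound a b). pose proof (Rle_abs (Re (inner a b))).
  rewrite <- (hnorm_sq a), <- (hnorm_sq b). nra.
Qed.

Lemma hnorm_sub_sym {H : Hilbert} (a b : H) : hnorm (hsub a b) = hnorm (hsub b a).
Proof. rewrite !hnorm_Nn. f_equal. inner_expand. ring. Qed.

Lemma hnorm_opp {H : Hilbert} (a : H) : hnorm (hopp a) = hnorm a.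
Proof. rewrite !hnorm_Nn. f_equal. inner_expand. ring. Qed.

Lemma hnorm_zero {H : Hilbert} (x : H) : hnorm x = 0 -> x = hzero.
Proof. intro E. apply Nn_zero. rewrite <- hnorm_sq, E. ring. Qed.

Lemma hsub_tri {H : Hilbert} (a b c : H) : hnorm (hsub a c) <= hnorm (hsub a b) + hnorm (hsub b c).
Proof.
  replace (hsub a c) with (hadd (hsub a b) (hsub b c)) by vec_eq. apply triangle.
Qed.

Lemma conv_ext {H : Hilbert} (u v : nat -> H) l : (forall n, u n = v n) -> converges u l -> converges v l.
Proof. intros E C eps He. destruct (C eps He) as [N HN]. exists N. intros n Hn. rewrite <- E. auto. Qed.

Lemma conv_const {H : Hilbert} (x : H) : converges (fun _ => x) x.
Proof. intros eps He. exists 0%nat. intros. replace (hsub x x) with (@hzero H) by vec_eq.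
  rewrite hnorm_Nn. unfold Nn. rewrite inner_0l. simpl. rewrite sqrt_0. exact He. Qed.

Lemma conv_add {H : Hilbert} (u v : nat -> H) x y : converges u x -> converges v y ->
  converges (fun n => hadd (u n) (v n)) (hadd x y).
Proof.
  intros Cu Cv eps He. destruct (Cu (eps/2)) as [N1 H1]; [lra|]. destruct (Cv (eps/2)) as [N2 H2]; [lra|].
  exists (max N1 N2). intros n Hn.
  replace (hsub (hadd (u n) (v n)) (hadd x y)) with (hadd (hsub (u n) x) (hsub (v n) y)) by vec_eq.
  eapply Rle_lt_trans. apply triangle.
  assert (hnorm (hsub (u n) x) < eps/2) by (apply H1; lia).
  assert (hnorm (hsub (v n) y) < eps/2) by (apply H2; lia). lra.
Qed.

Lemma conv_scal {H : Hilbert} (u : nat -> H) x c : converges u x ->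
  converges (fun n => hscal c (u n)) (hscal c x).
Proof.
  intros Cu eps He. pose proof (Cabs_pos c).
  destruct (Cu (eps/(Cabs c + 1))) as [N1 H1]. apply Rdiv_lt_0_compat; lra.
  exists N1. intros n Hn.
  replace (hsub (hscal c (u n)) (hscal c x)) with (hscal c (hsub (u n) x)) by vec_eq.
  rewrite hnorm_scal. specialize (H1 n Hn). pose proof (hnorm_pos (hsub (u n) x)).
  apply Rmult_lt_compat_r with (r := Cabs c + 1) in H1; [|lra].
  replace (eps / (Cabs c + 1) * (Cabs c + 1)) with eps in H1 by (field; lra). nra.
Qed.

Lemma conv_unique {H : Hilbert} (u : nat -> H) x y : converges u x -> converges u y -> x = y.
Proof.
  intros Cx Cy. apply vec_eq_lem. rewrite <- hnorm_sq.
  assert (Z : hnorm (hsub x y) = 0).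
  { destruct (Req_dec (hnorm (hsub x y)) 0) as [E|E]; auto.
    pose proof (hnorm_pos (hsub x y)).
    set (e := hnorm (hsub x y)) in *.
    destruct (Cx (e/2)) as [N1 H1]; [lra|]. destruct (Cy (e/2)) as [N2 H2]; [lra|].
    specialize (H1 (max N1 N2) ltac:(lia)). specialize (H2 (max N1 N2) ltac:(lia)).
    pose proof (hsub_tri x (u (max N1 N2)) y). rewrite hnorm_sub_sym in H1. unfold e in *. lra. }
  rewrite Z; ring.
Qed.

Lemma conv_cauchy {H : Hilbert} (u : nat -> H) x : converges u x ->
  forall eps, 0 < eps -> exists N, forall m n, (N <= m)%nat -> (N <= n)%nat -> hnorm (hsub (u m) (u n)) < eps.
Proof.
  intros C eps He. destruct (C (eps/2)) as [N H1]; [lra|]. exists N. intros m n Hm Hn.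
  pose proof (hsub_tri (u m) x (u n)). specialize (H1 m Hm) as A1. specialize (H1 n Hn) as A2.
  rewrite hnorm_sub_sym in A2. lra.
Qed.

Lemma complete {H : Hilbert} (u : nat -> H) :
  (forall eps, 0 < eps -> exists N, forall m n, (N <= m)%nat -> (N <= n)%nat -> hnorm (hsub (u m) (u n)) < eps) ->
  exists l, converges u l.
Proof. intro C. exact (hcomplete u C). Qed.
Lemma small_zero r : (forall e, 0 < e -> Rabs r < e) -> r = 0.
Proof.
  intro K. destruct (Req_dec r 0) as [E|E]; auto.
  specialize (K (Rabs r) (Rabs_pos_lt r E)). lra.
Qed.

Lemma prod_small x a e : 0 < e -> 0 <= x -> 0 <= a -> x < e / (a + 1) -> x * a < e.
Proof.
  intros He Hx Ha Hl. apply Rmult_lt_compat_r with (r := a + 1) in Hl; [|lra].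
  replace (e / (a + 1) * (a + 1)) with e in Hl by (field; lra). nra.
Qed.

Lemma lim_inner {H : Hilbert} (u v : nat -> H) x z a b :
  converges u x -> converges v z -> (forall n, inner (u n) a = inner (v n) b) ->
  inner x a = inner z b.
Proof.
  intros Cu Cv E.
  assert (K : forall e, 0 < e -> exists n,
     hnorm (hsub (u n) x) * hnorm a < e/2 /\ hnorm (hsub (v n) z) * hnorm b < e/2).
  { intros e He.
    destruct (Cu (e/2/(hnorm a + 1))) as [N1 H1]. apply Rdiv_lt_0_compat; pose proof (hnorm_pos a); lra.
    destruct (Cv (e/2/(hnorm b + 1))) as [N2 H2]. apply Rdiv_lt_0_compat; pose proof (hnorm_pos b); lra.
    exists (max N1 N2). split; apply prod_small; try lra; try apply hnorm_pos.
    apply H1; lia. apply H2; lia. }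
  apply Ceq; apply Rminus_diag_uniq; apply small_zero; intros e He;
    destruct (K e He) as [n [K1 K2]]; pose proof (E n) as En.
  - pose proof (re_bound (hsub (u n) x) a) as B1. pose proof (re_bound (hsub (v n) z) b) as B2.
    unfold hsub in B1, B2. rewrite inner_add, inner_opp_l in B1, B2. simpl in B1, B2.
    rewrite En in B1. unfold hsub in K1, K2.
    revert B1 B2. unfold Rabs. repeat destruct Rcase_abs; intros; lra.
  - pose proof (im_bound (hsub (u n) x) a) as B1. pose proof (im_bound (hsub (v n) z) b) as B2.
    unfold hsub in B1, B2. rewrite inner_add, inner_opp_l in B1, B2. simpl in B1, B2.
    rewrite En in B1. unfold hsub in K1, K2.
    revert B1 B2. unfold Rabs. repeat destruct Rcase_abs; intros; lra.
Qed.

Lemma dense_zero {H : Hilbert} (D : H -> Prop) v :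
  dense D -> (forall phi, D phi -> inner phi v = Czero) -> v = hzero.
Proof.
  intros Dd K. destruct (Dd v) as [u [Du Cu]].
  assert (E : inner v v = inner hzero v).
  { apply (lim_inner u (fun _ => hzero) v hzero v v Cu (conv_const _)).
    intro n. rewrite K by auto. rewrite inner_0l. reflexivity. }
  apply inner_def. rewrite E, inner_0l. reflexivity.
Qed.



Lemma lin_zero {H : Hilbert} (T : Op H) : is_linear T -> app T hzero = hzero.
Proof.
  intros [D0 [Dadd Dsc]]. destruct (Dadd hzero hzero D0 D0) as [_ E].
  rewrite hadd_0 in E. apply (hadd_reg (app T hzero)). rewrite hadd_0. symmetry; exact E.
Qed.

Lemma lin_add {H : Hilbert} (T : Op H) x y : is_linear T -> dom T x -> dom T y ->
  dom T (hadd x y) /\ app T (hadd x y) = hadd (app T x) (app T y).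
Proof. intros [D0 [Dadd Dsc]]. auto. Qed.

Lemma lin_scal {H : Hilbert} (T : Op H) a x : is_linear T -> dom T x ->
  dom T (hscal a x) /\ app T (hscal a x) = hscal a (app T x).
Proof. intros [D0 [Dadd Dsc]]. auto. Qed.

Lemma lin_sub {H : Hilbert} (T : Op H) x y : is_linear T -> dom T x -> dom T y ->
  dom T (hsub x y) /\ app T (hsub x y) = hsub (app T x) (app T y).
Proof.
  intros L Dx Dy. unfold hsub. rewrite !hopp_scal.
  destruct (lin_scal T (mkC (-1) 0) y L Dy) as [D1 E1].
  destruct (lin_add T x _ L Dx D1) as [D2 E2]. split; auto. rewrite E2, E1. reflexivity.
Qed.

Lemma sa_closed {H : Hilbert} (A : Op H) : self_adjoint A -> closed_op A.
Proof.
  intros SA. destruct SA as [L [Dn [Ch Sym]]].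
  intros u x y Du Cu Cy.
  assert (K : forall phi, dom A phi -> inner (app A phi) x = inner phi y).
  { intros phi Dphi.
    assert (E : inner x (app A phi) = inner y phi).
    { apply (lim_inner u (fun n => app A (u n)) x y (app A phi) phi Cu Cy).
      intro n. rewrite Sym by auto. reflexivity. }
    rewrite inner_conj, E, <- inner_conj. reflexivity. }
  assert (Dx : dom A x) by (apply Ch; exists y; exact K).
  split; auto.
  apply vec_eq_lem.
  assert (Z : hsub (app A x) y = hzero).
  2:{ rewrite Z. unfold Nn. rewrite inner_0l. reflexivity. }
  apply (dense_zero (dom A)); auto.
  intros phi Dphi. unfold hsub. rewrite inner_add_r, inner_opp_r.
  rewrite <- Sym by auto. rewrite K by auto. apply Ceq; simpl; ring.
Qed.
Lemma choice_seq {X : Type} (P : nat -> X -> Prop) : (forall n, exists x, P n x) -> exists f, forall n, P n (f n).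
Proof.
  intro K. exists (fun n => proj1_sig (constructive_indefinite_description _ (K n))).
  intro n. exact (proj2_sig (constructive_indefinite_description _ (K n))).
Qed.

Lemma quad_zero r a : 0 <= a -> (forall t, 0 <= -2 * t * r + t * t * a) -> r = 0.
Proof.
  intros Ha K. specialize (K (r / (a + 1))).
  assert (K2 : 0 <= (a+1)*(a+1) * (-2 * (r / (a + 1)) * r + r / (a + 1) * (r / (a + 1)) * a)) by
    (apply Rmult_le_pos; nra).
  replace ((a+1)*(a+1) * (-2 * (r / (a + 1)) * r + r / (a + 1) * (r / (a + 1)) * a))
    with (- (r*r) * (a + 2)) in K2 by (field; lra).
  nra.
Qed.

Lemma inv_small (N n : nat) : (0 < N)%nat -> (N <= n)%nat -> / (INR n + 1) <= / INR N.
Proof.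
  intros H0 H1. apply Rinv_le_contravar. apply lt_0_INR; lia.
  apply le_INR in H1. lra.
Qed.

Lemma sqrt_add_le a b : 0 <= a -> 0 <= b -> sqrt (a + b) <= sqrt a + sqrt b.
Proof.
  intros Ha Hb. rewrite <- (sqrt_square (sqrt a + sqrt b)).
  2: { pose proof (sqrt_pos a); pose proof (sqrt_pos b); lra. }
  apply sqrt_le_1_alt. pose proof (sqrt_sqrt a Ha). pose proof (sqrt_sqrt b Hb).
  pose proof (sqrt_pos a); pose proof (sqrt_pos b). nra.
Qed.

Lemma parallelogram {H : Hilbert} (g a b : H) :
  Nn (hsub a b) + 4 * Nn (hsub g (hscal (mkC (1/2) 0) (hadd a b))) = 2 * Nn (hsub g a) + 2 * Nn (hsub g b).
Proof. inner_expand. field. Qed.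

Lemma var_ident {H : Hilbert} (g l m : H) t :
  Nn (hsub g (hadd l (hscal (mkC t 0) m))) =
  Nn (hsub g l) - 2 * t * Re (inner (hsub g l) m) + t * t * Nn m.
Proof.
  replace (Re (inner (hsub g l) m)) with ((Re (inner (hsub g l) m) + Re (inner m (hsub g l)))/2).
  2: { rewrite (inner_conj m). simpl. field. }
  inner_expand. field.
Qed.

Lemma proj_thm {H : Hilbert} (M : H -> Prop) :
  M hzero -> (forall x y, M x -> M y -> M (hadd x y)) -> (forall a x, M x -> M (hscal a x)) ->
  (forall u z, (forall n, M (u n)) -> converges u z -> M z) ->
  forall g, exists m, M m /\ forall m', M m' -> inner (hsub g m) m' = Czero.
Proof.
  intros M0 Madd Msc Mcl g.
  set (E := fun r => exists m, M m /\ r = - Nn (hsub g m)).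
  assert (Hb : bound E).
  { exists 0. intros r [m [_ ->]]. pose proof (Nn_pos (hsub g m)). lra. }
  assert (Hne : exists r, E r) by (exists (- Nn (hsub g hzero)); exists hzero; auto).
  destruct (completeness E Hb Hne) as [L [Hub Hleast]].
  set (d := - L).
  assert (Low : forall m, M m -> d <= Nn (hsub g m)).
  { intros m Mm. assert (E (- Nn (hsub g m))) by (exists m; auto). apply Hub in H0. unfold d. lra. }
  assert (d0 : 0 <= d).
  { assert (L <= 0). { apply Hleast. intros r [m [_ ->]]. pose proof (Nn_pos (hsub g m)). lra. }
    unfold d; lra. }
  assert (Apx : forall eps, 0 < eps -> exists m, M m /\ Nn (hsub g m) < d + eps).
  { intros eps He. destruct (classic (exists m, M m /\ Nn (hsub g m) < d + eps)) as [Y|Nx]; auto.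
    exfalso. assert (L <= L - eps).
    { apply Hleast. intros r [m [Mm ->]]. destruct (Rlt_or_le (Nn (hsub g m)) (d + eps)).
      - exfalso; apply Nx; exists m; auto.
      - unfold d in *; lra. }
    lra. }
  destruct (choice_seq (fun n m => M m /\ Nn (hsub g m) < d + / (INR n + 1))) as [ms Hms].
  { intro n. apply Apx. apply Rinv_0_lt_compat. pose proof (pos_INR n). lra. }
  assert (Cau : forall eps, 0 < eps -> exists N, forall m n, (N <= m)%nat -> (N <= n)%nat ->
            hnorm (hsub (ms m) (ms n)) < eps).
  { intros eps He. destruct (archimed_cor1 (eps * eps / 4)) as [N0 [HN0 HN0p]].
    { apply Rdiv_lt_0_compat; nra. }
    exists N0. intros m n Hm Hn.
    destruct (Hms m) as [M1 L1]. destruct (Hms n) as [M2 L2].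
    pose proof (inv_small N0 m HN0p Hm). pose proof (inv_small N0 n HN0p Hn).
    pose proof (parallelogram g (ms m) (ms n)) as P.
    pose proof (Low _ (Msc (mkC (1/2) 0) _ (Madd _ _ M1 M2))) as Lw.
    assert (Nn (hsub (ms m) (ms n)) < eps * eps) by lra.
    rewrite hnorm_Nn. rewrite <- (sqrt_square eps) by lra.
    apply sqrt_lt_1; try apply Nn_pos; nra. }
  destruct (complete ms Cau) as [l Cl].
  assert (Ml : M l) by (apply (Mcl ms l); [intro n; apply Hms | exact Cl]).
  assert (Nl : Nn (hsub g l) <= d).
  { set (s := hnorm (hsub g l)).
    assert (s <= sqrt d).
    { destruct (Rle_or_lt s (sqrt d)) as [Y|Y]; auto. exfalso.
      set (dl := s - sqrt d).
      destruct (archimed_cor1 (dl * dl / 4)) as [N1 [HN1 HN1p]].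
      { apply Rdiv_lt_0_compat; unfold dl; nra. }
      destruct (Cl (dl/2)) as [N2 HN2]. { unfold dl; lra. }
      set (n := max N1 N2).
      pose proof (HN2 n ltac:(unfold n; lia)) as A2.
      pose proof (inv_small N1 n HN1p ltac:(unfold n; lia)) as A1.
      destruct (Hms n) as [_ A3].
      pose proof (hsub_tri g (ms n) l) as T1. fold s in T1.
      assert (B1 : hnorm (hsub g (ms n)) <= sqrt (d + / (INR n + 1))).
      { rewrite hnorm_Nn. apply sqrt_le_1_alt. lra. }
      assert (0 < / (INR n + 1)) by (apply Rinv_0_lt_compat; pose proof (pos_INR n); lra).
      pose proof (sqrt_add_le d (/ (INR n + 1)) d0 ltac:(lra)) as B2.
      assert (B3 : sqrt (/ (INR n + 1)) < dl / 2).
      { rewrite <- (sqrt_square (dl/2)) by (unfold dl; lra). apply sqrt_lt_1; try lra; nra. }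
      unfold dl in *. lra. }
    pose proof (hnorm_sq (hsub g l)) as Q. fold s in Q.
    pose proof (sqrt_sqrt d d0). assert (0 <= s) by apply hnorm_pos.
    rewrite <- Q. pose proof (sqrt_pos d). nra. }
  exists l. split; auto.
  assert (Rz : forall m', M m' -> Re (inner (hsub g l) m') = 0).
  { intros m' Mm'. apply (quad_zero _ (Nn m')). apply Nn_pos.
    intro t. pose proof (Low _ (Madd _ _ Ml (Msc (mkC t 0) _ Mm'))) as Lw.
    rewrite var_ident in Lw. lra. }
  intros m' Mm'. apply Ceq.
  - simpl. apply Rz; auto.
  - pose proof (Rz _ (Msc (mkC 0 1) _ Mm')) as Z. rewrite inner_scal_r in Z. simpl in Z.
    simpl. lra.
Qed.
Definition Tc {H : Hilbert} (A : Op H) (c : R) (y : H) : H := hadd (app A y) (hscal (mkC 0 c) y).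

Lemma hnorm_lt {H : Hilbert} (x : H) e : 0 < e -> Nn x < e * e -> hnorm x < e.
Proof. intros He K. rewrite hnorm_Nn, <- (sqrt_square e) by lra. apply sqrt_lt_1; try lra. apply Nn_pos. nra. Qed.

Lemma hnorm_lt_inv {H : Hilbert} (x : H) e : hnorm x < e -> Nn x < e * e.
Proof. intro K. rewrite <- hnorm_sq. pose proof (hnorm_pos x). nra. Qed.

Lemma Im_Aww {H : Hilbert} (A : Op H) w : self_adjoint A -> dom A w -> Im (inner (app A w) w) = 0.
Proof.
  intros [L [Dn [Ch Sym]]] Dw. pose proof (Sym w w Dw Dw) as E.
  rewrite E. pose proof E as E2.
  rewrite (inner_conj w (app A w)) in E2. apply (f_equal Im) in E2. simpl in E2. lra.
Qed.

Lemma graph_ident {H : Hilbert} (A : Op H) c w : self_adjoint A -> dom A w ->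
  Nn (Tc A c w) = Nn (app A w) + c * c * Nn w.
Proof.
  intros SA Dw. unfold Tc. rewrite Nn_add, Nn_scal, inner_scal_r. simpl.
  rewrite (Im_Aww A w SA Dw). ring.
Qed.

Lemma surj {H : Hilbert} (A : Op H) c : self_adjoint A -> 0 < c ->
  forall z, exists y, dom A y /\ Tc A c y = z.
Proof.
  intros SA Hc. pose proof SA as [L [Dn [Ch Sym]]].
  set (M := fun z => exists y, dom A y /\ Tc A c y = z).
  assert (M0 : M hzero).
  { exists hzero. split; [apply L|]. unfold Tc. rewrite (lin_zero A L). vec_eq. }
  assert (Madd : forall x y, M x -> M y -> M (hadd x y)).
  { intros x y [y1 [D1 <-]] [y2 [D2 <-]]. destruct (lin_add A y1 y2 L D1 D2) as [D3 E3].
    exists (hadd y1 y2). split; auto. unfold Tc. rewrite E3. vec_eq. }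
  assert (Msc : forall a x, M x -> M (hscal a x)).
  { intros a x [y1 [D1 <-]]. destruct (lin_scal A a y1 L D1) as [D3 E3].
    exists (hscal a y1). split; auto. unfold Tc. rewrite E3. vec_eq. }
  assert (Mcl : forall u z, (forall n, M (u n)) -> converges u z -> M z).
  { intros u z Mu Cu. destruct (choice_seq (fun n y => dom A y /\ Tc A c y = u n) Mu) as [ys Hys].
    assert (Key : forall m n, Nn (app A (hsub (ys m) (ys n))) + c * c * Nn (hsub (ys m) (ys n))
                               = Nn (hsub (u m) (u n))
               /\ app A (hsub (ys m) (ys n)) = hsub (app A (ys m)) (app A (ys n))).
    { intros m n. destruct (Hys m) as [Dm Em]. destruct (Hys n) as [Dn' En].
      destruct (lin_sub A _ _ L Dm Dn') as [Ds Es]. split; auto.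
      rewrite <- graph_ident by auto. f_equal. rewrite <- Em, <- En. unfold Tc. rewrite Es. vec_eq. }
    pose proof (conv_cauchy u z Cu) as Cc.
    assert (C1 : exists y, converges ys y).
    { apply complete. intros eps He. destruct (Cc (c * eps)) as [N HN]. nra.
      exists N. intros m n Hm Hn. apply hnorm_lt; auto. specialize (HN m n Hm Hn).
      apply hnorm_lt_inv in HN. destruct (Key m n) as [K1 _].
      pose proof (Nn_pos (app A (hsub (ys m) (ys n)))).
      assert (c * c * Nn (hsub (ys m) (ys n)) < c * c * (eps * eps)) by nra.
      apply Rmult_lt_reg_l with (c * c); nra. }
    assert (C2 : exists y, converges (fun n => app A (ys n)) y).
    { apply complete. intros eps He. destruct (Cc eps) as [N HN]. auto.
      exists N. intros m n Hm Hn. apply hnorm_lt; auto. specialize (HN m n Hm Hn).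
      apply hnorm_lt_inv in HN. destruct (Key m n) as [K1 K2]. rewrite <- K2.
      pose proof (Nn_pos (hsub (ys m) (ys n))). nra. }
    destruct C1 as [y Cy]. destruct C2 as [w Cw].
    destruct (sa_closed A SA ys y w (fun n => proj1 (Hys n)) Cy Cw) as [Dy Ey].
    exists y. split; auto.
    assert (Ct : converges (fun n => Tc A c (ys n)) (Tc A c y)).
    { unfold Tc. rewrite Ey. apply conv_add; auto. apply conv_scal; auto. }
    symmetry. apply (conv_unique u); auto.
    apply (conv_ext (fun n => Tc A c (ys n))); auto. intro n. apply Hys. }
  intro g. destruct (proj_thm M M0 Madd Msc Mcl g) as [m [Mm Orth]].
  set (e := hsub g m).
  assert (De : dom A e).
  { apply Ch. exists (hscal (mkC 0 c) e). intros f Df.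
    assert (O := Orth (Tc A c f) ltac:(exists f; auto)). fold e in O.
    apply (f_equal Cconj) in O. rewrite <- inner_conj in O. unfold Tc in O.
    rewrite inner_add, inner_scal in O. rewrite inner_scal_r.
    pose proof (f_equal Re O) as O1. pose proof (f_equal Im O) as O2. simpl in O1, O2.
    apply Ceq; simpl; lra. }
  assert (O := Orth (Tc A c e) ltac:(exists e; auto)). fold e in O.
  unfold Tc in O. rewrite inner_add_r, inner_scal_r in O. apply (f_equal Im) in O. simpl in O.
  rewrite <- (Sym e e De De) in O. rewrite (Im_Aww A e SA De) in O.
  assert (Nn e = 0). { unfold Nn. apply Rmult_eq_reg_l with c; lra. }
  assert (e = hzero) by (apply Nn_zero; auto).
  assert (g = m). { apply vec_eq_lem. fold e. rewrite H1. unfold Nn. rewrite inner_0l. reflexivity. }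
  rewrite H2. exact Mm.
Qed.
Lemma step {H : Hilbert} (A : Op H) c x : self_adjoint A -> 0 < c -> dom A x ->
  exists y, dom A y /\ app A y = hscal (mkC 0 c) (hsub x y) /\
    c * c * Nn (hsub y x) <= Nn (app A x) /\ Nn (app A y) <= Nn (app A x).
Proof.
  intros SA Hc Dx. pose proof SA as [L _].
  destruct (surj A c SA Hc (hscal (mkC 0 c) x)) as [y [Dy Ty]].
  assert (Ay : app A y = hscal (mkC 0 c) (hsub x y)).
  { transitivity (hsub (Tc A c y) (hscal (mkC 0 c) y)). unfold Tc; vec_eq. rewrite Ty; vec_eq. }
  destruct (lin_sub A y x L Dy Dx) as [Dw Ew].
  assert (Tw : Tc A c (hsub y x) = hopp (app A x)).
  { unfold Tc. rewrite Ew, Ay. vec_eq. }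
  pose proof (graph_ident A c (hsub y x) SA Dw) as G. rewrite Tw in G.
  assert (No : Nn (hopp (app A x)) = Nn (app A x)) by (inner_expand; ring).
  rewrite No in G. pose proof (Nn_pos (app A (hsub y x))).
  exists y. repeat split; auto. lra.
  rewrite Ay, Nn_scal. simpl.
  assert (Nn (hsub x y) = Nn (hsub y x)) by (inner_expand; ring). rewrite H1. nra.
Qed.

Lemma norm_bound_helper {H : Hilbert} (v : H) c a : 0 < c -> 0 <= a -> c * c * Nn v <= a * a -> hnorm v <= a / c.
Proof.
  intros Hc Ha K. rewrite <- hnorm_sq in K. pose proof (hnorm_pos v).
  assert (hnorm v * c <= a) by nra.
  apply Rmult_le_reg_r with c; auto. replace (a / c * c) with a by (field; lra). lra.
Qed.

Lemma D2approx {H : Hilbert} (A : Op H) g eps : self_adjoint A -> 0 < eps ->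
  exists h, dom A h /\ dom A (app A h) /\ hnorm (hsub h g) < eps.
Proof.
  intros SA He. pose proof SA as [L [Dn _]].
  destruct (Dn g) as [u [Du Cu]]. destruct (Cu (eps/3)) as [N HN]; [lra|].
  set (g1 := u N). assert (Dg1 : dom A g1) by apply Du.
  assert (B0 : hnorm (hsub g1 g) < eps / 3) by (apply HN; lia).
  set (a := hnorm (app A g1)). assert (a0 : 0 <= a) by apply hnorm_pos.
  set (c := 3 * (a + 1) / eps). assert (c0 : 0 < c) by (unfold c; apply Rdiv_lt_0_compat; lra).
  destruct (step A c g1 SA c0 Dg1) as [y1 [D1 [A1 [B1 C1]]]].
  destruct (step A c y1 SA c0 D1) as [y2 [D2 [A2 [B2 C2]]]].
  exists y2. split; auto. split.
  { rewrite A2. destruct (lin_sub A y1 y2 L D1 D2) as [Ds _]. apply lin_scal; auto. }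
  assert (aa : Nn (app A g1) = a * a) by (unfold a; symmetry; apply hnorm_sq).
  assert (E1 : hnorm (hsub y1 g1) <= a / c) by (apply norm_bound_helper; auto; lra).
  assert (E2 : hnorm (hsub y2 y1) <= a / c) by (apply norm_bound_helper; auto; lra).
  assert (E3 : a / c < eps / 3).
  { unfold c. replace (a / (3 * (a + 1) / eps)) with (eps / 3 * (a / (a + 1))) by (field; lra).
    assert (a / (a + 1) < 1). { apply Rmult_lt_reg_r with (a + 1); [lra|]. field_simplify; lra. }
    assert (0 <= a / (a + 1)) by (unfold Rdiv; apply Rmult_le_pos; [lra| left; apply Rinv_0_lt_compat; lra]). nra. }
  pose proof (hsub_tri y2 y1 g). pose proof (hsub_tri y1 g1 g). lra.
Qed.

Lemma D2dense {H : Hilbert} (A : Op H) g : self_adjoint A ->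
  exists h : nat -> H, (forall n, dom A (h n) /\ dom A (app A (h n))) /\ converges h g.
Proof.
  intro SA.
  destruct (choice_seq (fun n h => dom A h /\ dom A (app A h) /\ hnorm (hsub h g) < / (INR n + 1))) as [h Hh].
  { intro n. apply D2approx; auto. apply Rinv_0_lt_compat. pose proof (pos_INR n); lra. }
  exists h. split. intro n; split; apply Hh.
  intros eps He. destruct (archimed_cor1 eps He) as [N [HN HN0]]. exists N. intros n Hn.
  destruct (Hh n) as [_ [_ K]]. pose proof (inv_small N n HN0 Hn). lra.
Qed.
Lemma res_app {H : Hilbert} (B : Op H) lam R g : is_resolvent B lam R ->
  dom B (R g) /\ app B (R g) = hadd g (hscal lam (R g)).
Proof.
  intros [_ [K _]]. destruct (K g) as [D E]. split; auto.
  transitivity (hadd (hsub (app B (R g)) (hscal lam (R g))) (hscal lam (R g))). vec_eq.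
  rewrite E. reflexivity.
Qed.

Lemma res_sub {H : Hilbert} (B : Op H) lam R x y : is_linear B -> is_resolvent B lam R ->
  R (hsub x y) = hsub (R x) (R y).
Proof.
  intros L RR. pose proof RR as [_ [K1 K2]].
  destruct (res_app B lam R x RR) as [Dx Ex]. destruct (res_app B lam R y RR) as [Dy Ey].
  destruct (lin_sub B _ _ L Dx Dy) as [Ds Es].
  rewrite <- (K2 (hsub (R x) (R y)) Ds). f_equal. rewrite Es, Ex, Ey. vec_eq.
Qed.

Lemma res_conv {H : Hilbert} (B : Op H) lam R u x : is_linear B -> is_resolvent B lam R ->
  converges u x -> converges (fun n => R (u n)) (R x).
Proof.
  intros L RR Cu. pose proof RR as [[M HM] _].
  intros eps He. destruct (Cu (eps / (Rabs M + 1))) as [N HN].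
  { apply Rdiv_lt_0_compat; pose proof (Rabs_pos M); lra. }
  exists N. intros n Hn. rewrite <- (res_sub B lam R _ _ L RR).
  pose proof (HM (hsub (u n) x)). pose proof (HN n Hn).
  pose proof (hnorm_pos (hsub (u n) x)). pose proof (Rle_abs M).
  assert (hnorm (hsub (u n) x) * (Rabs M) < eps).
  { apply prod_small; auto. apply Rabs_pos. }
  nra.
Qed.

Lemma Cabs1 q : Cabs q = 1 -> Re q * Re q + Im q * Im q = 1.
Proof.
  unfold Cabs. intro E. assert (H0 : 0 <= Re q * Re q + Im q * Im q) by nra.
  rewrite <- (sqrt_sqrt _ H0), E. ring.
Qed.

Ltac qsolve Q1 q := apply Ceq; simpl;
  let a := constr:(Re q) in let b := constr:(Im q) in
  assert (Ha : (a*a + b*b)*a = a) by (rewrite Q1; ring);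
  assert (Hb : (a*a + b*b)*b = b) by (rewrite Q1; ring);
  assert (Hc : (a*a + b*b)*(a*a+b*b) = 1) by (rewrite Q1; ring);
  nra.

Theorem mainTheorem6 (H : Hilbert) (q mu : Cplx) (A B : Op H)
  (Rmu Rmuq Rmuq2 : H -> H) :
  Cabs q = 1 ->
  Cmul q q <> Cone ->
  self_adjoint A ->
  self_adjoint B ->
  in_resolvent_set B mu ->
  in_resolvent_set B (Cmul mu q) ->
  in_resolvent_set B (Cmul mu (Cmul q q)) ->
  is_resolvent B mu Rmu ->
  is_resolvent B (Cmul mu q) Rmuq ->
  is_resolvent B (Cmul mu (Cmul q q)) Rmuq2 ->
  op_incl (op_comp (op_total Rmu) A) (op_scale q (op_comp A (op_total Rmuq))) ->
  op_incl (op_comp (op_total Rmuq) A) (op_scale q (op_comp A (op_total Rmuq2))) ->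
  is_core (Dp (Cmul q q) (op_comp A A) B) B.
Proof.
  intros Hq _ SA SB _ _ _ R1 R2 R3 I1 I2.
  pose proof (Cabs1 q Hq) as Q1.
  pose proof SA as [LA _]. pose proof SB as [LB _].
  set (qb := Cconj q). set (lam := Cmul mu (Cmul q q)).
  assert (Mem : forall h, dom A h -> dom A (app A h) -> Dp (Cmul q q) (op_comp A A) B (Rmuq2 h)).
  { intros h Dh DAh.
    destruct (I2 h (conj Dh I)) as [[_ Df] Ef]. simpl in Df, Ef.
    destruct (I1 (app A h) (conj DAh I)) as [[_ DY] EY]. simpl in DY, EY.
    set (f := Rmuq2 h) in *. set (Y := Rmuq (app A h)) in *.
    assert (Af : app A f = hscal qb Y).
    { rewrite <- Ef, hscal_assoc. transitivity (hscal Cone (app A f)).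
      symmetry; apply hscal_1. f_equal. unfold qb; qsolve Q1 q. }
    destruct (lin_scal A qb Y LA DY) as [DAf EAf]. rewrite <- Af in DAf, EAf.
    set (P := Rmu (app A (app A h))) in *.
    set (k := app A (app A f)) in *.
    assert (Kk : k = hscal (Cmul qb qb) P).
    { rewrite EAf, <- EY, !hscal_assoc. f_equal. unfold qb; qsolve Q1 q. }
    destruct (res_app B mu Rmu (app A (app A h)) R1) as [DP EP]. fold P in DP, EP.
    destruct (lin_scal B (Cmul qb qb) P LB DP) as [Dk Ek]. rewrite <- Kk in Dk, Ek.
    destruct (res_app B lam Rmuq2 h R3) as [DBf EBf]. fold f in DBf, EBf.
    destruct (lin_scal A lam f LA Df) as [D1 E1].
    destruct (lin_add A h _ LA Dh D1) as [D2 E2]. rewrite <- EBf in D2, E2.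
    rewrite E1 in E2.
    destruct (lin_scal A lam _ LA DAf) as [D3 E3].
    destruct (lin_add A (app A h) _ LA DAh D3) as [D4 E4]. rewrite <- E2 in D4, E4.
    unfold Dp; simpl. split; [split; auto | split; [split; auto; split; auto |]].
    fold k. rewrite E4, E3, Ek, EP. fold k.
    assert (PP : P = hscal (Cmul q q) k).
    { rewrite Kk, hscal_assoc. transitivity (hscal Cone P). symmetry; apply hscal_1.
      f_equal. unfold qb; qsolve Q1 q. }
    rewrite PP, hscal_assoc.
    transitivity (hscal (Cmul (Cmul q q) (Cmul qb qb)) (hadd (app A (app A h)) (hscal mu (hscal (Cmul q q) k)))).
    2: { rewrite hscal_assoc. reflexivity. }
    replace (Cmul (Cmul q q) (Cmul qb qb)) with Cone by (unfold qb; qsolve Q1 q).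
    rewrite hscal_1. unfold lam. vec_eq. }
  split.
  - intros f [_ [[Db _] _]]. exact Db.
  - intros f Df. set (g := hsub (app B f) (hscal lam f)).
    destruct (D2dense A g SA) as [h [Dh Ch]].
    exists (fun n => Rmuq2 (h n)). split; [|split].
    + intro n. apply Mem; apply Dh.
    + pose proof R3 as [_ [_ K3]]. rewrite <- (K3 f Df) at 1. fold lam. fold g.
      apply (res_conv B lam); auto.
    + apply (conv_ext (fun n => hadd (h n) (hscal lam (Rmuq2 (h n))))).
      { intro n. symmetry. apply (res_app B lam Rmuq2 (h n) R3). }
      replace (app B f) with (hadd g (hscal lam f)) by (unfold g; vec_eq).
      apply conv_add; auto. apply conv_scal.
      pose proof R3 as [_ [_ K3]]. rewrite <- (K3 f Df) at 1. fold lam. fold g.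
      apply (res_conv B lam); auto.
Qed.
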